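(* Let $\Omega\subset\mathbb{R}^d$, let $\Phi$ be such that $K(x,y)=\Phi(x-y)$ is a symmetric positive definite kernel on $\Omega$, let $x_1,\dots,x_n\in\Omega$ be distinct, $y_1,\dots,y_n\in\mathbb{R}$, $\lambda>0$, let $\Theta$ be a parameter set and $y^s:\Omega\times\Theta\to\mathbb{R}$. Write $\mathbf{\Phi}=(\Phi(x_i-x_j))_{ij}$, $Y=(y_1,\dots,y_n)^T$, $y^s(X;\theta)=(y^s(x_1,\theta),\dots,y^s(x_n,\theta))^T$, $\zeta^\theta_i=y_i-y^s(x_i,\theta)$, and $$\hat\zeta^\theta=\operatorname*{argmin}_{g\in\mathcal{N}_\Phi(\Omega)}\frac1n\sum_{i=1}^n(\zeta_i^\theta-g(x_i))^2+\lambda\|g\|^2_{\mathcal{N}_\Phi(\Omega)}.$$ Then $$\operatorname*{argmin}_{\theta\in\Theta}(Y-y^s(X;\theta))^T(\mathbf{\Phi}+n\lambda I_n)^{-1}(Y-y^s(X;\theta))=\operatorname*{argmin}_{\theta\in\Theta}\frac1n\sum_{i=1}^n(\zeta_i^\theta-\hat\zeta^\theta(x_i))^2+\lambda\|\hat\zeta^\theta\|^2_{\mathcal{N}_\Phi(\Omega)},$$ i.e. the maximum likelihood estimator $\hat\theta$ defined by the left-hand side is characterized by the right-hand side.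
   Context: $\mathcal{N}_\Phi(\Omega)$ is the reproducing kernel Hilbert space: the completion of $\{\sum_{i=1}^n\beta_i\Phi(\cdot-x_i):\beta_i\in\mathbb{R},x_i\in\Omega\}$ under $\langle\sum_i\beta_i\Phi(\cdot-x_i),\sum_j\gamma_j\Phi(\cdot-x'_j)\rangle=\sum_{i,j}\beta_i\gamma_j\Phi(x_i-x'_j)$. *)

(* Defs.v *)
From HB Require Import structures.
From mathcomp Require Import all_boot all_order all_algebra.
From mathcomp Require Import all_classical all_reals all_analysis.
Set Implicit Arguments. Unset Strict Implicit. Unset Printing Implicit Defensive.
Import Order.TTheory GRing.Theory Num.Theory.
Import numFieldNormedType.Exports.
Local Open Scope classical_set_scope.
Local Open Scope ring_scope.

Section Native.
Variables (R : realType) (d : nat).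
Notation pt := 'rV[R]_d.

Definition spd_kernel (Phi : pt -> R) (Omega : set pt) : Prop :=
  (forall x y, Omega x -> Omega y -> Phi (x - y) = Phi (y - x)) /\
  (forall (m : nat) (z : 'I_m -> pt) (beta : 'I_m -> R),
      (forall i, Omega (z i)) -> injective z -> (exists i, beta i != 0) ->
      0 < \sum_(i < m) \sum_(j < m) beta i * beta j * Phi (z i - z j)).

(* An element sum_i beta_i Phi(. - x_i) of the pre-Hilbert space, as a list of
   (beta_i, x_i). *)
Definition comb := seq (R * pt).

Definition comb_eval (Phi : pt -> R) (f : comb) (z : pt) : R :=
  \sum_(p <- f) p.1 * Phi (z - p.2).

Definition comb_sqnorm (Phi : pt -> R) (f : comb) : R :=
  \sum_(p <- f) \sum_(q <- f) p.1 * q.1 * Phi (p.2 - q.2).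

Definition comb_opp (f : comb) : comb := [seq (- p.1, p.2) | p <- f].

Definition comb_in (Omega : set pt) (f : comb) : Prop :=
  forall p, p \in f -> Omega p.2.

(* g belongs to the completion N_Phi(Omega) with squared norm s: g is the
   (pointwise on Omega) limit of a Cauchy sequence f_k of the pre-Hilbert space,
   and s = lim ||f_k||^2. *)
Definition native_sqnorm (Phi : pt -> R) (Omega : set pt) (g : pt -> R) (s : R)
  : Prop :=
  exists f : nat -> comb,
    (forall k, comb_in Omega (f k)) /\
    (forall e : R, 0 < e -> exists N : nat, forall k m : nat, (N <= k)%N -> (N <= m)%N ->
        comb_sqnorm Phi (f k ++ comb_opp (f m)) < e) /\
    (forall z, Omega z -> (fun k => comb_eval Phi (f k) z) @ \oo --> g z) /\
    ((fun k => comb_sqnorm Phi (f k)) @ \oo --> s).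

Definition in_native (Phi : pt -> R) (Omega : set pt) (g : pt -> R) : Prop :=
  exists s, native_sqnorm Phi Omega g s.

Definition reg_obj (n : nat) (x : 'I_n -> pt) (zeta : 'I_n -> R) (lambda : R)
  (g : pt -> R) (s : R) : R :=
  n%:R^-1 * \sum_(i < n) (zeta i - g (x i)) ^+ 2 + lambda * s.

Definition is_reg_minimizer (Phi : pt -> R) (Omega : set pt) (n : nat)
  (x : 'I_n -> pt) (zeta : 'I_n -> R) (lambda : R) (g : pt -> R) (s : R) : Prop :=
  native_sqnorm Phi Omega g s /\
  forall h t, native_sqnorm Phi Omega h t ->
    reg_obj x zeta lambda g s <= reg_obj x zeta lambda h t.

Definition kernel_mx (Phi : pt -> R) (n : nat) (x : 'I_n -> pt) : 'M[R]_n :=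
  \matrix_(i, j) Phi (x i - x j).

Definition mle_obj (Phi : pt -> R) (n : nat) (x : 'I_n -> pt) (lambda : R)
  (r : 'cV[R]_n) : R :=
  ((r^T *m invmx (kernel_mx Phi x + (n%:R * lambda)%:M)) *m r) 0 0.

End Native.

(* Main.v *)
Require Import Defs.
From HB Require Import structures.
From mathcomp Require Import all_boot all_order all_algebra.
From mathcomp Require Import all_classical all_reals all_analysis.
From mathcomp Require Import ring lra.
Import Order.TTheory GRing.Theory Num.Theory.
Import numFieldNormedType.Exports.
Local Open Scope classical_set_scope.
Local Open Scope ring_scope.

Section Aux.
Variables (R : realType) (d : nat).
Notation pt := 'rV[R]_d.

Lemma filter_eq1 (T : eqType) (s : seq T) a : uniq s -> a \in s ->
  [seq i <- s | a == i] = [:: a].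
Proof.
elim: s => [//|b s IH] /= /andP[bn us].
rewrite inE => /orP[/eqP ->|ins].
  rewrite eqxx; congr cons; apply/eqP; rewrite -[_ == _]negbK -has_filter.
  apply/hasPn => z zs; apply/negP => /eqP ez; by rewrite ez zs in bn.
have -> : (a == b) = false by apply/negP => /eqP ab; rewrite -ab ins in bn.
exact: IH.
Qed.

Lemma sum_partition {T : eqType} {U : eqType} (f : seq U) (key : U -> T) (H : U -> R) :
  \sum_(p <- f) H p = \sum_(z <- undup (map key f)) \sum_(p <- f | key p == z) H p.
Proof.
under [RHS]eq_bigr => z _ do rewrite big_mkcond /=.
rewrite exchange_big /= big_seq [RHS]big_seq; apply: eq_bigr => p pf.
rewrite -big_mkcond /= -big_filter filter_eq1 ?undup_uniq ?big_seq1 //.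
by rewrite mem_undup; apply: map_f.
Qed.

Lemma comb_psd (Phi : pt -> R) (Omega : set pt) : spd_kernel Phi Omega ->
  forall f, comb_in Omega f -> 0 <= comb_sqnorm Phi f.
Proof.
move=> [_ Hpd] f fin.
set S := undup (map snd f).
pose beta z := \sum_(p <- f | p.2 == z) p.1.
have -> : comb_sqnorm Phi f = \sum_(z <- S) \sum_(w <- S) beta z * beta w * Phi (z - w).
  rewrite /comb_sqnorm (sum_partition f snd); apply: eq_bigr => z _.
  under eq_bigr => p _ do rewrite (sum_partition f snd).
  rewrite exchange_big /=; apply: eq_bigr => w _.
  rewrite /beta !mulr_suml; apply: eq_bigr => p /eqP pz.
  rewrite mulr_sumr mulr_suml; apply: eq_bigr => q /eqP qw.
  by rewrite pz qw.
rewrite (big_nth 0) big_mkord.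
under eq_bigr => i _ do rewrite (big_nth 0) big_mkord.
have uS : uniq S by apply: undup_uniq.
case: (pselect (exists i : 'I_(size S), beta (nth 0 S i) != 0)) => [ex|nex].
  apply: ltW; apply: (Hpd _ (fun i : 'I_(size S) => nth 0 S i)) => //.
  - move=> i; have : nth 0 S i \in S by apply: mem_nth.
    rewrite mem_undup => /mapP [p pf ->]; exact: fin.
  - by move=> i j /eqP; rewrite nth_uniq // => /eqP /val_inj.
rewrite big1 // => i _; rewrite big1 // => j _.
have -> : beta (nth 0 S i) = 0.
  by apply/eqP; apply: contra_notT nex => ne; exists i.
by rewrite !mul0r.
Qed.

Definition gcomb {n : nat} (x : 'I_n -> pt) (c : 'I_n -> R) : comb R d :=
  [seq (c i, x i) | i <- enum 'I_n].

Lemma eval_gcomb (Phi : pt -> R) n (x : 'I_n -> pt) c z :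
  comb_eval Phi (gcomb x c) z = \sum_i c i * Phi (z - x i).
Proof. by rewrite /comb_eval big_map big_enum. Qed.

Lemma sq_gcomb (Phi : pt -> R) n (x : 'I_n -> pt) c :
  comb_sqnorm Phi (gcomb x c) = \sum_i \sum_j c i * c j * Phi (x i - x j).
Proof.
rewrite /comb_sqnorm big_map big_enum; apply: eq_bigr => i _ /=.
by rewrite big_map big_enum.
Qed.

Lemma opp_gcomb n (x : 'I_n -> pt) c : comb_opp (gcomb x c) = gcomb x (fun i => - c i).
Proof. by rewrite /comb_opp /gcomb -map_comp. Qed.

Lemma cross (Phi : pt -> R) (Omega : set pt) n (x : 'I_n -> pt) c f :
  (forall z w, Omega z -> Omega w -> Phi (z - w) = Phi (w - z)) ->
  comb_in Omega f -> (forall i, Omega (x i)) ->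
  comb_sqnorm Phi (f ++ gcomb x (fun i => - c i)) =
  comb_sqnorm Phi f - 2 * \sum_i c i * comb_eval Phi f (x i)
  + \sum_i \sum_j c i * c j * Phi (x i - x j).
Proof.
move=> sym fin xin.
rewrite /comb_sqnorm big_cat /=.
under eq_bigr => p _ do rewrite big_cat /=.
under [X in _ + X]eq_bigr => p _ do rewrite big_cat /=.
rewrite big_split /= big_split /=.
have -> : \sum_(i <- gcomb x (fun i => - c i)) \sum_(j <- gcomb x (fun i => - c i))
    i.1 * j.1 * Phi (i.2 - j.2) = \sum_i \sum_j c i * c j * Phi (x i - x j).
  rewrite -/(comb_sqnorm Phi _) sq_gcomb; apply: eq_bigr => i _; apply: eq_bigr => j _.
  by rewrite mulrNN.
have E : \sum_i c i * comb_eval Phi f (x i) =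
    \sum_(i <- gcomb x (fun i => - c i)) \sum_(j <- f) - (i.1 * j.1 * Phi (i.2 - j.2)).
  rewrite big_map big_enum; apply: eq_bigr => i _ /=.
  rewrite /comb_eval mulr_sumr; apply: eq_bigr => q _.
  by rewrite !mulNr opprK mulrA.
have E2 : \sum_i c i * comb_eval Phi f (x i) =
    \sum_(j <- f) \sum_(i <- gcomb x (fun i => - c i)) - (j.1 * i.1 * Phi (j.2 - i.2)).
  rewrite E exchange_big /= big_seq [RHS]big_seq; apply: eq_bigr => q qf.
  rewrite big_map big_enum [RHS]big_map big_enum; apply: eq_bigr => i _ /=.
  by rewrite (sym _ _ (fin _ qf) (xin i)) (mulrC q.1).
have HB : \sum_(i <- f) \sum_(j <- gcomb x (fun i => - c i)) i.1 * j.1 * Phi (i.2 - j.2)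
    = - \sum_i c i * comb_eval Phi f (x i).
  rewrite E2 -sumrN; apply: eq_bigr => j _; by rewrite -sumrN; apply: eq_bigr => i _; rewrite opprK.
have HC : \sum_(i <- gcomb x (fun i => - c i)) \sum_(j <- f) i.1 * j.1 * Phi (i.2 - j.2)
    = - \sum_i c i * comb_eval Phi f (x i).
  rewrite E -sumrN; apply: eq_bigr => j _; by rewrite -sumrN; apply: eq_bigr => i _; rewrite opprK.
lra.
Qed.

Lemma cvg_bigsum (I : Type) (r : seq I) (F : I -> nat -> R) (l : I -> R) :
  (forall i, (fun n => F i n) @ \oo --> l i) ->
  (fun n => \sum_(i <- r) F i n) @ \oo --> \sum_(i <- r) l i.
Proof.
move=> H; elim: r => [|a r IH].
  have -> : (fun n => \sum_(i <- [::]) F i n) = (fun=> 0) by apply: funext => n; rewrite big_nil.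
  rewrite big_nil; exact: cvg_cst.
have -> : (fun n => \sum_(i <- a :: r) F i n) = (F a + (fun n => \sum_(i <- r) F i n)).
  by apply: funext => n; rewrite big_cons.
rewrite big_cons; exact: cvgD.
Qed.

Lemma native_lb (Phi : pt -> R) (Omega : set pt) n (x : 'I_n -> pt) c h t :
  spd_kernel Phi Omega -> (forall i, Omega (x i)) ->
  native_sqnorm Phi Omega h t ->
  2 * \sum_i c i * h (x i) - \sum_i \sum_j c i * c j * Phi (x i - x j) <= t.
Proof.
move=> spd xin [f [fin [_ [hc tc]]]].
pose Q := \sum_i \sum_j c i * c j * Phi (x i - x j).
pose u k := comb_sqnorm Phi (f k) - 2 * \sum_i c i * comb_eval Phi (f k) (x i) + Q.
have u0 : forall k, 0 <= u k.
  move=> k; rewrite /u -(@cross Phi Omega n x c (f k) spd.1 (fin k) xin).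
  apply: (@comb_psd Phi Omega spd) => p; rewrite mem_cat => /orP[pf|]; first exact: (fin k p pf).
  by move=> /mapP [i _ ->]; apply: xin.
have uc : u @ \oo --> t - 2 * \sum_i c i * h (x i) + Q.
  apply: cvgD; last exact: cvg_cst.
  apply: cvgB => //; apply: cvgMl_tmp; apply: cvg_bigsum => i.
  apply: cvgMl_tmp; exact: hc.
have H0 : \forall k \near \oo, 0 <= u k by apply: nearW.
have := limr_ge (cvgP _ uc) H0; rewrite (cvg_lim _ uc) //.
move=> /(_ _) H; rewrite /Q in H; lra.
Qed.

Lemma A_unit (Phi : pt -> R) (Omega : set pt) n (x : 'I_n -> pt) (lambda : R) :
  spd_kernel Phi Omega -> (forall i, Omega (x i)) -> injective x -> 0 < lambda ->
  kernel_mx Phi x + (n%:R * lambda)%:M \in unitmx.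
Proof.
move=> [_ Hpd] xin xinj lp.
rewrite unitmxE unitfE; apply/negP => /det0P [v vn0 vA].
have ex : exists i, v 0 i != 0.
  apply/not_existsP => H; apply/negP: vn0; rewrite negbK; apply/eqP/matrixP => a b.
  rewrite (ord1 a) mxE; apply/eqP; move: (H b); by case: (v 0 b == 0).
have := Hpd n x (fun i => v 0 i) xin xinj ex.
have E : \sum_(i < n) \sum_(j < n) v 0 i * v 0 j * Phi (x i - x j)
   + n%:R * lambda * \sum_i v 0 i ^+ 2 = 0.
  have H0 : \sum_j (v *m (kernel_mx Phi x + (n%:R * lambda)%:M)) 0 j * v 0 j = 0.
    by rewrite vA; apply: big1 => j _; rewrite mxE mul0r.
  rewrite -[RHS]H0.
  rewrite exchange_big mulr_sumr -big_split /=; apply: eq_bigr => j _.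
  rewrite mxE mulr_suml.
  under [RHS]eq_bigr => i _ do rewrite !mxE mulrDr mulrDl.
  rewrite big_split /=; congr (_ + _).
    by apply: eq_bigr => i _; rewrite mulrAC.
  rewrite (bigD1 j) //= big1 ?addr0; first by rewrite eqxx mulr1n expr2; ring.
  by move=> i /negbTE ->; rewrite mulr0n mulr0 mul0r.
have : 0 <= n%:R * lambda * \sum_i v 0 i ^+ 2.
  by apply: mulr_ge0; [apply: mulr_ge0 => //; apply: ltW | apply: sumr_ge0 => i _; apply: sqr_ge0].
lra.
Qed.

Lemma sq_scale (m a : R) : m^-1 * (m * a) ^+ 2 = m * a ^+ 2.
Proof.
have [->|mn0] := eqVneq m 0; first by rewrite invr0 !mul0r.
by field.
Qed.

Lemma value (Phi : pt -> R) (Omega : set pt) n (x : 'I_n -> pt) (lambda : R)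
  (zeta : 'I_n -> R) g s :
  spd_kernel Phi Omega -> (forall i, Omega (x i)) -> injective x -> 0 < lambda ->
  is_reg_minimizer Phi Omega x zeta lambda g s ->
  reg_obj x zeta lambda g s = lambda * mle_obj Phi x lambda (\col_i zeta i).
Proof.
move=> spd xin xinj lp [Hn Hmin].
set A := kernel_mx Phi x + (n%:R * lambda)%:M.
have Au : A \in unitmx by apply: (@A_unit Phi Omega n x lambda spd xin xinj lp).
set cm := invmx A *m \col_i zeta i.
pose cv i := cm i 0.
have key : forall i, zeta i = \sum_j cv j * Phi (x i - x j) + n%:R * lambda * cv i.
  move=> i.
  have := congr1 (fun M : 'cV[R]_n => M i 0) (mulKVmx Au (\col_i zeta i)).
  rewrite -/cm [in RHS]mxE => <-.
  rewrite [in LHS]mxE.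
  under [LHS]eq_bigr => j _ do rewrite [A i j]mxE [kernel_mx _ _ i j]mxE [_%:M i j]mxE mulrDl.
  rewrite big_split /=; congr (_ + _).
    by apply: eq_bigr => j _; rewrite mulrC.
  rewrite (bigD1 i) //= big1 ?addr0; first by rewrite eqxx mulr1n.
  by move=> j /negbTE; rewrite eq_sym => ->; rewrite mulr0n mul0r.
have mleE : mle_obj Phi x lambda (\col_i zeta i) = \sum_i zeta i * cv i.
  rewrite /mle_obj -mulmxA -/A -/cm mxE; apply: eq_bigr => i _.
  by rewrite [_^T 0 i]mxE [(\col__ _) i 0]mxE.
pose Q := \sum_i \sum_j cv i * cv j * Phi (x i - x j).
have QE : Q = \sum_i cv i * (zeta i - n%:R * lambda * cv i).
  apply: eq_bigr => i _; rewrite (key i) addrK mulr_sumr.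
  by apply: eq_bigr => j _; rewrite mulrA.
rewrite mleE; apply/eqP; rewrite eq_le; apply/andP; split.
- (* upper bound via the candidate *)
  have Hc : native_sqnorm Phi Omega (comb_eval Phi (gcomb x cv)) Q.
    exists (fun=> gcomb x cv); split; first by move=> k p /mapP [i _ ->]; apply: xin.
    split.
      move=> e e0; exists 0%N => k m _ _.
      rewrite opp_gcomb (@cross Phi Omega n x cv _ spd.1) //; last first.
        by move=> p /mapP [i _ ->]; apply: xin.
      rewrite sq_gcomb -/Q.
      have -> : \sum_i cv i * comb_eval Phi (gcomb x cv) (x i) = Q.
        apply: eq_bigr => i _; rewrite eval_gcomb mulr_sumr.
        by apply: eq_bigr => j _; rewrite mulrA.
      by rewrite (_ : Q - 2 * Q + Q = 0) //; ring.
    split; last by rewrite sq_gcomb; apply: cvg_cst.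
    by move=> z _; apply: cvg_cst.
  apply: (le_trans (Hmin _ _ Hc)); rewrite le_eqVlt; apply/orP; left; apply/eqP.
  rewrite /reg_obj QE.
  have -> : \sum_i (zeta i - comb_eval Phi (gcomb x cv) (x i)) ^+ 2
      = \sum_i (n%:R * (lambda * cv i)) ^+ 2.
    apply: eq_bigr => i _; rewrite eval_gcomb {1}(key i) addrC addKr mulrA.
    by congr (_ ^+ 2); rewrite -mulrA.
  rewrite mulr_sumr.
  rewrite !mulr_sumr -big_split /=; apply: eq_bigr => i _.
  rewrite sq_scale; ring.
-
  have Hlb := @native_lb Phi Omega n x cv g s spd xin Hn.
  apply: le_trans (_ : n%:R^-1 * \sum_i (zeta i - g (x i)) ^+ 2
      + lambda * (2 * \sum_i cv i * g (x i) - Q) <= _); last first.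
    by rewrite /reg_obj lerD2l ler_pM2l.
  rewrite QE !mulr_sumr -sumrB !mulr_sumr -big_split /=.
  apply: ler_sum => i _.
  have n0 : 0 < n%:R :> R by rewrite ltr0n; case: n i {A Au cm cv key mleE Q QE Hlb zeta x xin xinj Hmin Hn} => [[]|].
  set w := zeta i - g (x i).
  have -> : g (x i) = zeta i - w by rewrite /w opprB addrC subrK.
  rewrite -subr_ge0.
  have -> : n%:R^-1 * w ^+ 2 + lambda * (2 * (cv i * (zeta i - w))
      - cv i * (zeta i - n%:R * lambda * cv i)) - lambda * (zeta i * cv i)
      = n%:R^-1 * (w - n%:R * lambda * cv i) ^+ 2.
    by field; rewrite gt_eqF.
  by apply: mulr_ge0; [rewrite invr_ge0 ltW | apply: sqr_ge0].
Qed.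
End Aux.

Theorem theorem3p1 (R : realType) (d : nat) (Omega : set 'rV[R]_d)
  (Phi : 'rV[R]_d -> R) (n : nat) (x : 'I_n -> 'rV[R]_d) (y : 'I_n -> R)
  (lambda : R) (Theta : Type) (ys : 'rV[R]_d -> Theta -> R)
  (zhat : Theta -> 'rV[R]_d -> R) (shat : Theta -> R) :
  spd_kernel Phi Omega ->
  (forall i, Omega (x i)) -> injective x ->
  0 < lambda ->
  (* zhat theta is the argmin defining \hat zeta^theta, shat theta its squared norm *)
  (forall theta, is_reg_minimizer Phi Omega x (fun i => y i - ys (x i) theta) lambda
                   (zhat theta) (shat theta)) ->
  forall theta0 : Theta,
    (forall theta : Theta,
       mle_obj Phi x lambda (\col_i (y i - ys (x i) theta0))
       <= mle_obj Phi x lambda (\col_i (y i - ys (x i) theta))) <->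
    (forall theta : Theta,
       reg_obj x (fun i => y i - ys (x i) theta0) lambda (zhat theta0) (shat theta0)
       <= reg_obj x (fun i => y i - ys (x i) theta) lambda (zhat theta) (shat theta)).
Proof.
move=> spd xin xinj lp Hmin theta0.
have V := fun th => @value R d Phi Omega n x lambda _ _ _ spd xin xinj lp (Hmin th).
split=> H theta; first by rewrite !V ler_pM2l.
by have := H theta; rewrite !V ler_pM2l.
Qed.
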